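(* Suppose $\mathcal U$ is regular enough that each functional $\phi^q_k:=\delta_{y_k}\circ L_q$ ($q=1,\dots,Q$, $k=1,\dots,K$) belongs to the dual $\mathcal U^\star$. Consider the problem $$\min_{v^1,\dots,v^M\in\mathcal U,\ G\in\mathcal P}\ \|G\|_{\mathcal P}^2+\lambda\sum_{m=1}^M\|v^m\|_{\mathcal U}^2\quad\text{s.t.}\quad v^m(Y^m)=u^m(Y^m),\ \ (G+\overline P)(\Phi(v^m,y_k))=f^m(y_k)\ \ \forall m,\ \forall k.$$ Then every minimizer $(\widehat u^1,\dots,\widehat u^M,\widehat P)$ can be written as $$\widehat u^m(y)=\mathsf U(\phi,y)^T\widehat\alpha^m,\qquad \widehat P(s)=\mathsf P(S(\widehat{\boldsymbol\alpha}),s)^T\widehat\beta,$$ where $(\widehat{\boldsymbol\alpha},\widehat\beta)$, $\widehat{\boldsymbol\alpha}=(\widehat\alpha^1,\dots,\widehat\alpha^M)\in(\mathbb R^{QK})^M$, $\widehat\beta\in\mathbb R^{MK}$, solves $$\min_{\boldsymbol\alpha\in(\mathbb R^{QK})^M,\ \beta\in\mathbb R^{MK}}\ \beta^T\mathsf P(S(\boldsymbol\alpha),S(\boldsymbol\alpha))\beta+\lambda\sum_{m=1}^M(\alpha^m)^T\mathsf U(\phi,\phi)\alpha^m$$ subject to $\mathsf U(\phi,Y^m)^T\alpha^m=u^m(Y^m)$ and $\mathsf P(S(\boldsymbol\alpha),S^m(\alpha^m))^T\beta=f^m(Y)-\overline P(S^m(\alpha^m))$ for $m=1,\dots,M$.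
   Context: Setting: $\mathcal Y\subset\mathbb R^d$; known linear differential operators $L_1=\mathrm{Id},L_2,\dots,L_Q$; $\mathcal S=\mathbb R^{Q+d}$; $\Phi(v,y)=(y,L_1v(y),\dots,L_Qv(y))\in\mathcal S$. $\mathsf U:\mathcal Y\times\mathcal Y\to\mathbb R$ and $\mathsf P:\mathcal S\times\mathcal S\to\mathbb R$ are positive definite symmetric kernels with RKHSs $\mathcal U$, $\mathcal P$; $\overline P:\mathcal S\to\mathbb R$ is known; $\lambda>0$. Training data: for $m=1,\dots,M$, observation sets $Y^m=\{y^m_1,\dots,y^m_N\}$ with values $u^m(Y^m)\in\mathbb R^N$, and functions $f^m$. Collocation points $Y=\{y_1,\dots,y_K\}\subset\mathcal Y$ with $\bigcup_mY^m\subset Y$; $f^m(Y)=(f^m(y_1),\dots,f^m(y_K))$. Notation: $\mathsf U(\phi^q_k,y):=\phi^q_k(\mathsf U(\cdot,y))$ (apply $L_q$ in the first argument and evaluate at $y_k$); $\mathsf U(\phi^q_k,\phi^\ell_j):=\phi^\ell_j(\mathsf U(\phi^q_k,\cdot))$. $\mathsf U(\phi,y)\in\mathbb R^{QK}$ is the vector $(\mathsf U(\phi^1_1,y),\dots,\mathsf U(\phi^1_K,y),\dots,\mathsf U(\phi^Q_1,y),\dots,\mathsf U(\phi^Q_K,y))$; $\mathsf U(\phi,\phi)\in\mathbb R^{QK\times QK}$ is the block matrix with $(q,\ell)$ block $(\mathsf U(\phi^q_k,\phi^\ell_j))_{k,j=1}^K$; $\mathsf U(\phi,Y^m)\in\mathbb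 R^{QK\times N}$ has columns $\mathsf U(\phi,y^m_n)$. For $\alpha^m\in\mathbb R^{QK}$, $S^m(\alpha^m)=(\Phi(\mathsf U(\phi,\cdot)^T\alpha^m,y_k))_{k=1}^K$ ($K$ points of $\mathcal S$), $S(\boldsymbol\alpha)=\bigcup_{m=1}^MS^m(\alpha^m)$ ($MK$ points); for point lists $A,A'$, $\mathsf P(A,A')$ is the matrix $(\mathsf P(a,a'))_{a\in A,a'\in A'}$ and $\mathsf P(A,s)$ the vector $(\mathsf P(a,s))_{a\in A}$; $\overline P(S^m(\alpha^m))\in\mathbb R^K$ is the vector of values of $\overline P$ on $S^m(\alpha^m)$. When kernel matrices are singular, coefficient vectors are understood in the least-squares sense. *)

(* Defs.v *)
From mathcomp Require Import all_boot all_order all_algebra.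
From mathcomp Require Import reals.
Set Implicit Arguments. Unset Strict Implicit. Unset Printing Implicit Defensive.
Import Order.TTheory GRing.Theory Num.Theory.
Local Open Scope ring_scope.

Section Defs.
Variable R : realType.

Definition pd_sym_kernel (T : Type) (k : T -> T -> R) : Prop :=
  (forall x y, k x y = k y x) /\
  (forall (n : nat) (x : 'I_n -> T) (c : 'I_n -> R),
      0 <= \sum_(i < n) \sum_(j < n) c i * k (x i) (x j) * c j).

Definition is_RKHS (T : Type) (k : T -> T -> R) (H : (T -> R) -> Prop)
    (ip : (T -> R) -> (T -> R) -> R) : Prop :=
    H (fun _ => 0) /\
      (forall (a : R) f g, H f -> H g -> H (fun x => a * f x + g x)) /\
      (forall f g, H f -> H g -> ip f g = ip g f) /\
      (forall (a : R) f g h, H f -> H g -> H h ->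
          ip (fun x => a * f x + g x) h = a * ip f h + ip g h) /\
      (forall f, H f -> 0 <= ip f f) /\
      (forall f, H f -> ip f f = 0 -> f = (fun _ => 0)) /\
      (forall y, H (fun x => k x y)) /\
      (forall f y, H f -> ip f (fun x => k x y) = f y) /\
      (forall u : nat -> T -> R, (forall n, H (u n)) ->
        (forall e : R, 0 < e -> exists N : nat, forall m n : nat,
            (N <= m)%N -> (N <= n)%N ->
            ip (fun x => u m x - u n x) (fun x => u m x - u n x) < e) ->
        exists g, H g /\
          (forall e : R, 0 < e -> exists N : nat, forall n : nat, (N <= n)%N ->
            ip (fun x => u n x - g x) (fun x => u n x - g x) < e)).

Definition linear_on (T : Type) (H : (T -> R) -> Prop)
    (L : (T -> R) -> (T -> R)) : Prop :=
  forall (a : R) f g, H f -> H g ->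
    L (fun x => a * f x + g x) = (fun x => a * L f x + L g x).

Definition in_dual (T : Type) (H : (T -> R) -> Prop)
    (ip : (T -> R) -> (T -> R) -> R) (phi : (T -> R) -> R) : Prop :=
  (forall (a : R) f g, H f -> H g ->
      phi (fun x => a * f x + g x) = a * phi f + phi g) /\
  (exists C : R, forall f, H f -> phi f ^+ 2 <= C * ip f f).

Variables (d Q K M : nat) (Y : Type) (emb : Y -> 'rV[R]_d).
Variable L : 'I_Q -> (Y -> R) -> (Y -> R).
Variable yc : 'I_K -> Y.

Definition phi (q : 'I_Q) (k : 'I_K) (v : Y -> R) : R := L q v (yc k).

Definition PhiS (v : Y -> R) (y : Y) : 'rV[R]_(d + Q) :=
  row_mx (emb y) (\row_(q < Q) L q v y).

Variable Uk : Y -> Y -> R.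

Definition Uphi_pt (a : 'I_Q * 'I_K) (y : Y) : R :=
  phi a.1 a.2 (fun z => Uk z y).

Definition Uphi_phi (a b : 'I_Q * 'I_K) : R :=
  phi b.1 b.2 (fun z => Uphi_pt a z).

Definition ufun (alpha : 'I_Q * 'I_K -> R) (y : Y) : R :=
  \sum_(a : 'I_Q * 'I_K) Uphi_pt a y * alpha a.

Definition Sm (alpha : 'I_Q * 'I_K -> R) (k : 'I_K) : 'rV[R]_(d + Q) :=
  PhiS (ufun alpha) (yc k).

Definition Sall (alpha : 'I_M -> 'I_Q * 'I_K -> R) (i : 'I_M * 'I_K) :
  'rV[R]_(d + Q) := Sm (alpha i.1) i.2.

Variable Pk : 'rV[R]_(d + Q) -> 'rV[R]_(d + Q) -> R.

Definition Pfun (alpha : 'I_M -> 'I_Q * 'I_K -> R) (beta : 'I_M * 'I_K -> R)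
    (s : 'rV[R]_(d + Q)) : R :=
  \sum_(i : 'I_M * 'I_K) Pk (Sall alpha i) s * beta i.

Variables (lambda : R) (N : nat) (Yobs : 'I_M -> 'I_N -> Y)
  (uobs : 'I_M -> 'I_N -> R) (f : 'I_M -> Y -> R)
  (Pbar : 'rV[R]_(d + Q) -> R).

Definition fin_objective (alpha : 'I_M -> 'I_Q * 'I_K -> R)
    (beta : 'I_M * 'I_K -> R) : R :=
  \sum_(i : 'I_M * 'I_K) \sum_(j : 'I_M * 'I_K)
      beta i * Pk (Sall alpha i) (Sall alpha j) * beta j
  + lambda * \sum_(m < M) \sum_(a : 'I_Q * 'I_K) \sum_(b : 'I_Q * 'I_K)
      alpha m a * Uphi_phi a b * alpha m b.

Definition fin_feasible (alpha : 'I_M -> 'I_Q * 'I_K -> R)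
    (beta : 'I_M * 'I_K -> R) : Prop :=
  (forall (m : 'I_M) (n : 'I_N),
      \sum_(a : 'I_Q * 'I_K) Uphi_pt a (Yobs m n) * alpha m a = uobs m n) /\
  (forall (m : 'I_M) (k : 'I_K),
      \sum_(i : 'I_M * 'I_K) Pk (Sall alpha i) (Sm (alpha m) k) * beta i
      = f m (yc k) - Pbar (Sm (alpha m) k)).

Definition fin_minimizer alpha beta : Prop :=
  fin_feasible alpha beta /\
  (forall alpha' beta', fin_feasible alpha' beta' ->
      fin_objective alpha beta <= fin_objective alpha' beta').

Variables (HU : (Y -> R) -> Prop) (ipU : (Y -> R) -> (Y -> R) -> R)
  (HP : ('rV[R]_(d + Q) -> R) -> Prop)
  (ipP : ('rV[R]_(d + Q) -> R) -> ('rV[R]_(d + Q) -> R) -> R).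

Definition inf_objective (v : 'I_M -> Y -> R) (G : 'rV[R]_(d + Q) -> R) : R :=
  ipP G G + lambda * \sum_(m < M) ipU (v m) (v m).

Definition inf_feasible (v : 'I_M -> Y -> R) (G : 'rV[R]_(d + Q) -> R) : Prop :=
  [/\ (forall m, HU (v m)), HP G,
      (forall (m : 'I_M) (n : 'I_N), v m (Yobs m n) = uobs m n) &
      (forall (m : 'I_M) (k : 'I_K),
          G (PhiS (v m) (yc k)) + Pbar (PhiS (v m) (yc k)) = f m (yc k))].

Definition inf_minimizer v G : Prop :=
  inf_feasible v G /\
  (forall v' G', inf_feasible v' G' ->
      inf_objective v G <= inf_objective v' G').

End Defs.

Definition dom_t (R : realType) (d : nat) (Ydom : 'rV[R]_d -> Prop) : Type :=
  {y : 'rV[R]_d | Ydom y}.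

(* Main.v *)
Require Import Defs.
From mathcomp Require Import all_boot all_order all_algebra.
From mathcomp Require Import reals.
From mathcomp Require classical_sets.
From mathcomp Require Import ring lra.
From Stdlib Require Import FunctionalExtensionality IndefiniteDescription Classical.
Import Order.TTheory GRing.Theory Num.Theory.
Local Open Scope ring_scope.

Module HilbA.
Import classical_sets.
Section Hilb.
Variable R : realType.
Variable T : Type.
Variable H : (T -> R) -> Prop.
Variable ip : (T -> R) -> (T -> R) -> R.
Hypothesis H0 : H (fun _ => 0).
Hypothesis Hlin : forall (a : R) f g, H f -> H g -> H (fun x => a * f x + g x).
Hypothesis ipsym : forall f g, H f -> H g -> ip f g = ip g f.
Hypothesis iplin : forall (a : R) f g h, H f -> H g -> H h ->
          ip (fun x => a * f x + g x) h = a * ip f h + ip g h.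
Hypothesis ippos : forall f, H f -> 0 <= ip f f.

Definition lc (a : R) f (b : R) g : T -> R := fun x => a * f x + b * g x.

Lemma Hscal b g : H g -> H (fun x => b * g x).
Proof.
move=> Hg; have -> : (fun x => b * g x) = (fun x => b * g x + (fun _ => 0) x).
  by apply: functional_extensionality => x; rewrite addr0.
exact: Hlin.
Qed.

Lemma lcH a f b g : H f -> H g -> H (lc a f b g).
Proof. move=> Hf Hg; rewrite /lc. exact: (Hlin a f (fun x => b * g x) Hf (Hscal b g Hg)). Qed.

Lemma ip0 h : H h -> ip (fun _ => 0) h = 0.
Proof.
move=> Hh; have := iplin 1 (fun _ => 0) (fun _ => 0) h H0 H0 Hh.
have -> : (fun _ : T => 1 * 0 + 0) = (fun _ : T => (0:R)).
  by apply: functional_extensionality => x; rewrite mulr0 addr0.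
move=> E; have : ip (fun _ => 0) h = 2 * ip (fun _ => 0) h by rewrite {1}E; ring.
lra.
Qed.

Lemma ipscal b g h : H g -> H h -> ip (fun x => b * g x) h = b * ip g h.
Proof.
move=> Hg Hh; have -> : (fun x => b * g x) = (fun x => b * g x + (fun _ => 0) x).
  by apply: functional_extensionality => x; rewrite addr0.
by rewrite iplin // ip0 // addr0.
Qed.

Lemma ipL a f b g h : H f -> H g -> H h ->
  ip (lc a f b g) h = a * ip f h + b * ip g h.
Proof.
move=> Hf Hg Hh; rewrite /lc (iplin a f (fun x => b * g x)) //; last exact: Hscal.
by rewrite ipscal.
Qed.

Lemma ipR a f b g h : H f -> H g -> H h ->
  ip h (lc a f b g) = a * ip h f + b * ip h g.
Proof.
move=> Hf Hg Hh; have Hl := lcH a f b g Hf Hg; rewrite (ipsym h _ Hh Hl) ipL // (ipsym f h Hf Hh) (ipsym g h Hg Hh). all: by [].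

Qed.

Lemma ipLL a f b g c d : H f -> H g ->
  ip (lc a f b g) (lc c f d g) =
  a * c * ip f f + (a * d + b * c) * ip f g + b * d * ip g g.
Proof.
move=> Hf Hg; have Hl := lcH c f d g Hf Hg.
rewrite (ipL a f b g _ Hf Hg Hl) (ipR c f d g f Hf Hg Hf) (ipR c f d g g Hf Hg Hg) (ipsym g f Hg Hf); ring.
Qed.

Lemma quad0 (c q : R) : 0 <= q -> (forall t, t * c <= t ^+ 2 * q) -> c = 0.
Proof.
move=> q0 Ht; have h1 : 0 < q + 1 by lra.
have hu := Ht (c / (2 * (q + 1))).
set u := (c / _) in hu.
have hu2 : c = u * (2 * (q+1)) by rewrite /u mulfVK //; lra.
rewrite hu2 in hu *.
have h3 : u ^+ 2 * (q + 2) <= 0 by rewrite !expr2 in hu *; nra.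
have h4 : u ^+ 2 = 0.
  apply/eqP; rewrite eq_le sqr_ge0 andbT.
  have h5 : 0 < q + 2 by lra.
  by rewrite -(pmulr_lle0 _ h5).
by move/eqP: h4; rewrite sqrf_eq0 => /eqP ->; rewrite mul0r.
Qed.

Lemma orth_min v h : H v -> H h ->
  (forall t, ip v v <= ip (lc t h 1 v) (lc t h 1 v)) -> ip v h = 0.
Proof.
move=> Hv Hh ht.
have q0 := ippos h Hh.
have : - 2 * ip h v = 0.
  apply: (quad0 (- 2 * ip h v) (ip h h) q0) => t; have := ht t; rewrite ipLL //; rewrite expr2; lra.
rewrite (ipsym v h Hv Hh); lra.
Qed.

Lemma sumH (I : Type) (r : seq I) (F : I -> T -> R) (c : I -> R) :
  (forall i, H (F i)) -> H (fun x => \sum_(i <- r) F i x * c i).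
Proof.
move=> HF; elim: r => [|a r IH].
  have -> : (fun x => \sum_(i <- [::]) F i x * c i) = (fun _ => 0).
    by apply: functional_extensionality => x; rewrite big_nil.
  exact: H0.
have -> : (fun x => \sum_(i <- a :: r) F i x * c i) =
   lc (c a) (F a) 1 (fun x => \sum_(i <- r) F i x * c i).
  by apply: functional_extensionality => x; rewrite big_cons /lc mul1r mulrC.
exact: lcH.
Qed.

Lemma ipsum (I : Type) (r : seq I) (F : I -> T -> R) (c : I -> R) h :
  (forall i, H (F i)) -> H h ->
  ip (fun x => \sum_(i <- r) F i x * c i) h = \sum_(i <- r) c i * ip (F i) h.
Proof.
move=> HF Hh; elim: r => [|a r IH].
  have -> : (fun x => \sum_(i <- [::]) F i x * c i) = (fun _ => 0).
    by apply: functional_extensionality => x; rewrite big_nil.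
  by rewrite ip0 // big_nil.
have -> : (fun x => \sum_(i <- a :: r) F i x * c i) =
   lc (c a) (F a) 1 (fun x => \sum_(i <- r) F i x * c i).
  by apply: functional_extensionality => x; rewrite big_cons /lc mul1r mulrC.
by rewrite ipL //; [rewrite IH big_cons mul1r | exact: sumH].
Qed.

Lemma span_fun (I : finType) (phi : I -> (T -> R) -> R)
 (philin : forall i a f g, H f -> H g ->
     phi i (fun x => a * f x + g x) = a * phi i f + phi i g) :
 forall (S : {set I}) (l : (T -> R) -> R),
 (forall a f g, H f -> H g -> l (fun x => a * f x + g x) = a * l f + l g) ->
 (forall w, H w -> (forall i, i \in S -> phi i w = 0) -> l w = 0) ->
 exists c : I -> R, forall w, H w -> l w = \sum_(i in S) c i * phi i w.
Proof.
move=> S; move: {2}#|S| (erefl #|S|) => n; elim: n S => [|n IH] S hS l llin hyp.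
  exists (fun _ => 0) => w Hw; rewrite big1 => [|i _]; last by rewrite mul0r.
  apply: hyp => // i; move: hS => /eqP; rewrite cards_eq0 => /eqP ->.
  by rewrite inE.
have /set0Pn [i0 Hi0] : S != finset.set0 by rewrite -card_gt0 hS.
have hS' : #|S :\ i0| = n by move: hS; rewrite (cardsD1 i0 S) Hi0 add1n => -[].
case: (classic (exists x0, H x0 /\ (forall i, i \in S :\ i0 -> phi i x0 = 0)
                 /\ phi i0 x0 != 0)).
  case=> x0 [Hx0 [hx0 hp]].
  pose p := phi i0 x0.
  pose l' := fun w => l w - (l x0 / p) * phi i0 w.
  have l'lin : forall a f g, H f -> H g ->
      l' (fun x => a * f x + g x) = a * l' f + l' g.
    by move=> a f g Hf Hg; rewrite /l' llin // philin //; ring.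
  have hl' : forall w, H w -> (forall i, i \in S :\ i0 -> phi i w = 0) -> l' w = 0.
    move=> w Hw hw.
    pose z := fun x => (- (phi i0 w / p)) * x0 x + w x.
    have Hz : H z by apply: Hlin.
    have hz : l z = 0.
      apply: hyp => // i iS.
      case: (eqVneq i i0) => [->|ne].
        rewrite /z philin // -/p mulNr divfK //; ring.
      have h1 : i \in S :\ i0 by rewrite in_setD1 ne iS.
      rewrite /z philin // (hx0 i h1) (hw i h1); ring.
    move: hz; rewrite /z llin // /l' => hz.
    have -> : l w = phi i0 w / p * l x0 by lra.
    ring.
  have [c hc] := IH _ hS' l' l'lin hl'.
  exists (fun i => if i == i0 then l x0 / p else c i) => w Hw.
  rewrite (big_setD1 i0 Hi0) /= eqxx.
  rewrite (eq_bigr (fun i => c i * phi i w)); last first.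
    by move=> i; rewrite in_setD1 => /andP [/negbTE -> _].
  rewrite -hc //; rewrite /l'; ring.
move=> nex.
have hl' : forall w, H w -> (forall i, i \in S :\ i0 -> phi i w = 0) -> l w = 0.
  move=> w Hw hw; apply: hyp => // i iS.
  case: (eqVneq i i0) => [->|ne]; last by apply: hw; rewrite in_setD1 ne.
  apply/eqP; apply: contraT => hne; case: nex; exists w; split=> //.
have [c hc] := IH _ hS' l llin hl'.
exists (fun i => if i == i0 then 0 else c i) => w Hw.
rewrite (big_setD1 i0 Hi0) /= eqxx mul0r add0r.
rewrite (eq_bigr (fun i => c i * phi i w)); last first.
  by move=> i; rewrite in_setD1 => /andP [/negbTE -> _].
exact: hc.
Qed.

Lemma lin_lc (phi : (T -> R) -> R) :
  (forall a f g, H f -> H g -> phi (fun x => a * f x + g x) = a * phi f + phi g) ->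
  forall a f b g, H f -> H g -> phi (lc a f b g) = a * phi f + b * phi g.
Proof.
move=> plin a f b g Hf Hg.
have p0 : phi (fun _ => 0) = 0.
  have := plin 1 (fun _ => 0) (fun _ => 0) H0 H0.
  have -> : (fun _ : T => 1 * 0 + 0) = (fun _ : T => (0:R)).
    by apply: functional_extensionality => x; rewrite mulr0 addr0.
  lra.
have ps : phi (fun x => b * g x) = b * phi g.
  have -> : (fun x => b * g x) = (fun x => b * g x + (fun _ => 0) x).
    by apply: functional_extensionality => x; rewrite addr0.
  by rewrite plin // p0 addr0.
by rewrite /lc plin //; [rewrite ps | exact: Hscal].
Qed.

Lemma cs x y : H x -> H y -> ip x y ^+ 2 <= (ip x x + 1) * ip y y.
Proof.
move=> Hx Hy.
set A := ip x x; set D := ip y y; set P := ip x y.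
have A0 : 0 <= A := ippos x Hx. have D0 : 0 <= D := ippos y Hy.
pose t := - P / (A + 1).
have hA1 : 0 < A + 1 by lra.
have ht : t * (A + 1) = - P by rewrite /t mulfVK // lt0r_neq0.
have h := ippos _ (lcH t x 1 y Hx Hy).
rewrite ipLL // -/A -/D -/P in h.
have h2 : 0 <= (t * (A+1)) ^+ 2 * A + 2 * (t * (A + 1)) * P * (A + 1) + D * (A+1)^+2.
  have h3 : 0 <= (A+1)^+2 * (t * t * A + (t * 1 + 1 * t) * P + 1 * 1 * D).
    by apply: mulr_ge0 => //; apply: sqr_ge0.
  rewrite !expr2 in h3 *; nra.
rewrite ht in h2.
have h4 : P*P*(A+1) <= (A+1)*D*(A+1) by rewrite !expr2 in h2; nra.
by rewrite expr2 -(ler_pM2r hA1).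
Qed.

Lemma small_inv (e : R) : 0 < e -> exists N0, forall n, (N0 <= n)%N -> (n.+1%:R)^-1 < e.
Proof.
move=> e0; exists (Num.Def.archi_bound (e^-1)) => n hn.
have ei : 0 <= e^-1 by rewrite invr_ge0 ltW.
have h1 := archi_boundP ei.
have h2 : (Num.Def.archi_bound e^-1)%:R <= n%:R :> R by rewrite ler_nat.
have h3 : n%:R < n.+1%:R :> R by rewrite ltr_nat.
have hpos : 0 < n.+1%:R :> R by rewrite ltr0n.
rewrite -(ltr_pM2r hpos) mulVf ?gt_eqF //.
have : e^-1 < n.+1%:R by lra.
move=> h; have he : e * e^-1 = 1 by rewrite mulfV // gt_eqF.
nra.
Qed.

Hypothesis Hcomp : forall u : nat -> T -> R, (forall n, H (u n)) ->
        (forall e : R, 0 < e -> exists N : nat, forall m n : nat,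
            (N <= m)%N -> (N <= n)%N ->
            ip (fun x => u m x - u n x) (fun x => u m x - u n x) < e) ->
        exists g, H g /\
          (forall e : R, 0 < e -> exists N : nat, forall n : nat, (N <= n)%N ->
            ip (fun x => u n x - g x) (fun x => u n x - g x) < e).

Lemma riesz (phi : (T -> R) -> R) :
  (forall a f g, H f -> H g -> phi (fun x => a * f x + g x) = a * phi f + phi g) ->
  (exists C : R, forall f, H f -> phi f ^+ 2 <= C * ip f f) ->
  exists r, H r /\ forall h, H h -> ip r h = phi h.
Proof.
move=> plin [C hC].
have plc := lin_lc phi plin.
pose C1 := `|C| + 1.
have C10 : 0 < C1 by rewrite /C1; have := normr_ge0 C; lra.
have hC1 : forall f, H f -> phi f ^+ 2 <= C1 * ip f f.
  move=> f Hf; apply: (le_trans (hC f Hf)); apply: ler_wpM2r; first exact: ippos.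
  by rewrite /C1; have := ler_norm C; lra.
pose Kf f := phi f - ip f f / 2.
pose E := [set x : R | exists f, H f /\ x = Kf f]%classic.
have ub : forall f, H f -> Kf f <= C1 / 2.
  move=> f Hf; have h1 := hC1 f Hf; have h2 := ippos f Hf.
  have h3 := sqr_ge0 (phi f - C1).
  rewrite /Kf; rewrite !expr2 in h1 h3; nra.
have hsE : has_sup E.
  split; first by exists (Kf (fun _ => 0)); exists (fun _ => 0).
  by exists (C1 / 2) => x [f [Hf ->]]; apply: ub.
set Ms := sup E.
have supub : forall f, H f -> Kf f <= Ms.
  by move=> f Hf; apply: (sup_upper_bound hsE); exists f.
have adh : forall n : nat, exists f, H f /\ Ms - (n.+1%:R)^-1 < Kf f.
  move=> n; have hn : 0 < (n.+1%:R)^-1 :> R by rewrite invr_gt0 ltr0Sn.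
  have [x [f [Hf ->]] hx] := sup_adherent hn hsE.
  by exists f.
have [u hu] := functional_choice _ adh.
have Hu : forall n, H (u n) by move=> n; case: (hu n).
have mid : forall m n, ip (lc 1 (u m) (-1) (u n)) (lc 1 (u m) (-1) (u n))
      <= 4 * ((m.+1%:R)^-1 + (n.+1%:R)^-1).
  move=> m n.
  have h := supub _ (lcH (1/2) (u m) (1/2) (u n) (Hu m) (Hu n)).
  move: h; rewrite /Kf plc ?Hu // !ipLL ?Hu //.
  have [_ hm] := hu m; have [_ hn] := hu n.
  move: hm hn; rewrite /Kf => hm hn h; set em := (m.+1%:R)^-1 in hm *; set en := (n.+1%:R)^-1 in hn *; lra.
have hcauchy : forall e : R, 0 < e -> exists N : nat, forall m n : nat,
            (N <= m)%N -> (N <= n)%N ->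
            ip (fun x => u m x - u n x) (fun x => u m x - u n x) < e.
  move=> e e0; have [N0 hN0] := small_inv (e / 8) ltac:(lra).
  exists N0 => m n hm hn.
  have -> : (fun x => u m x - u n x) = lc 1 (u m) (-1) (u n).
    by apply: functional_extensionality => x; rewrite /lc mul1r mulN1r.
  have := mid m n; have := hN0 m hm; have := hN0 n hn.
  set em := (m.+1%:R)^-1; set en := (n.+1%:R)^-1; lra.
have [g [Hg hg]] := Hcomp u Hu hcauchy.
have KgM : Ms <= Kf g.
  rewrite leNgt; apply/negP => hlt.
  pose dl := (Ms - Kf g) / 4.
  have dl0 : 0 < dl by rewrite /dl; lra.
  pose eta := dl ^+ 2 / (ip g g + 1 + C1).
  have Ng0 := ippos g Hg.
  have eta0 : 0 < eta by rewrite /eta divr_gt0 // ?exprn_gt0 //; lra.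
  have [N0 hN0] := hg eta eta0.
  have [N1 hN1] := small_inv dl dl0.
  pose n := maxn N0 N1.
  have hn0 := hN0 n (leq_maxl N0 N1).
  have hn1 := hN1 n (leq_maxr N0 N1).
  set f := u n in hn0 hn1.
  have Hf : H f := Hu n.
  have [_ hKf] := hu n.
  have ed : (fun x => f x - g x) = lc 1 f (-1) g.
    by apply: functional_extensionality => x; rewrite /lc mul1r mulN1r.
  rewrite ed in hn0.
  have Hd := lcH 1 f (-1) g Hf Hg.
  have hcs := cs g _ Hg Hd.
  have hph := hC1 _ Hd.
  set Nd := ip (lc 1 f (-1) g) (lc 1 f (-1) g) in hn0 hcs hph.
  have Nd0 : 0 <= Nd := ippos _ Hd.
  have hetaK : (ip g g + 1 + C1) * eta = dl ^+ 2 by rewrite /eta mulrC divfK //; lra.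
  have b1 : (ip g (lc 1 f (-1) g)) ^+ 2 < dl ^+ 2.
    apply: (le_lt_trans hcs); rewrite -hetaK; nra.
  have b2 : (phi (lc 1 f (-1) g)) ^+ 2 < dl ^+ 2.
    apply: (le_lt_trans hph); rewrite -hetaK; nra.
  have c1 : - ip g (lc 1 f (-1) g) < dl by rewrite !expr2 in b1; nra.
  have c2 : phi (lc 1 f (-1) g) < dl by rewrite !expr2 in b2; nra.
  have hd : 0 <= ip (lc 1 f (-1) g) (lc 1 f (-1) g) := Nd0.
  rewrite ipLL // in hd.
  rewrite plc // in c2.
  rewrite ipR // (ipsym g f Hg Hf) in c1.
  have dlE : 4 * dl = Ms - Kf g by rewrite /dl; lra.
  move: hKf hlt dlE; rewrite /Kf => hKf hlt dlE.
  set en := (n.+1%:R)^-1 in hn1 hKf.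
  lra.
exists g; split => // h Hh.
have q0 : 0 <= ip h h / 2 by have := ippos h Hh; lra.
suff : phi h - ip g h = 0 by lra.
apply: (quad0 (phi h - ip g h) (ip h h / 2) q0) => t.
have := supub _ (lcH t h 1 g Hh Hg).
rewrite /Kf plc // ipLL // (ipsym h g Hh Hg).
move: KgM; rewrite /Kf => KgM hh.
rewrite expr2; lra.
Qed.

End Hilb.
Arguments lc {R T}.
End HilbA.
Import HilbA.

Theorem theorem2 (R : realType) (d Q K M N : nat)
    (Ydom : 'rV[R]_d -> Prop)
    (L : 'I_Q -> (dom_t Ydom -> R) -> (dom_t Ydom -> R))
    (Uk : dom_t Ydom -> dom_t Ydom -> R)
    (Pk : 'rV[R]_(d + Q) -> 'rV[R]_(d + Q) -> R)
    (HU : (dom_t Ydom -> R) -> Prop)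
    (ipU : (dom_t Ydom -> R) -> (dom_t Ydom -> R) -> R)
    (HP : ('rV[R]_(d + Q) -> R) -> Prop)
    (ipP : ('rV[R]_(d + Q) -> R) -> ('rV[R]_(d + Q) -> R) -> R)
    (Pbar : 'rV[R]_(d + Q) -> R) (lambda : R)
    (yc : 'I_K -> dom_t Ydom)
    (Yobs : 'I_M -> 'I_N -> dom_t Ydom) (uobs : 'I_M -> 'I_N -> R)
    (f : 'I_M -> dom_t Ydom -> R)
    (hQ : (0 < Q)%N)
    (hL1 : forall v, L (Ordinal hQ) v = v)
    (hUk : pd_sym_kernel Uk) (hPk : pd_sym_kernel Pk)
    (hU : is_RKHS Uk HU ipU) (hP : is_RKHS Pk HP ipP)
    (hLlin : forall q, linear_on HU (L q))
    (hdual : forall q k, in_dual HU ipU (phi L yc q k))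
    (hlam : 0 < lambda)
    (hobs : forall m n, exists k, Yobs m n = yc k) :
  forall (v : 'I_M -> dom_t Ydom -> R) (G : 'rV[R]_(d + Q) -> R),
    inf_minimizer (fun y => sval y) L yc lambda Yobs uobs f Pbar HU ipU HP ipP v G ->
    exists (alpha : 'I_M -> 'I_Q * 'I_K -> R) (beta : 'I_M * 'I_K -> R),
      [/\ (forall m, v m = ufun L yc Uk (alpha m)),
          G = Pfun (fun y => sval y) L yc Uk Pk alpha beta &
          fin_minimizer (fun y => sval y) L yc Uk Pk lambda Yobs uobs f Pbar
            alpha beta].
Proof.
move=> v G [hfeas hmin].
have [HU0 [HUlin [HUsym [HUip [HUpos [_ [HUk [HUrep HUcomp]]]]]]]] := hU.
have [HP0 [HPlin [HPsym [HPip [HPpos [_ [HPk [HPrep HPcomp]]]]]]]] := hP.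
have [Psym _] := hPk.
case: hfeas => HUv HPG hobsv hconstr.
have rA : forall a, HU (Uphi_pt L yc Uk a) /\
    forall h, HU h -> ipU (Uphi_pt L yc Uk a) h = phi L yc a.1 a.2 h.
  move=> a; have [hl hb] := hdual a.1 a.2.
  have [r [Hr hr]] := riesz _ _ _ _ HU0 HUlin HUsym HUip HUpos HUcomp _ hl hb.
  have -> : Uphi_pt L yc Uk a = r; last by [].
  apply: functional_extensionality => y.
  by rewrite -(HUrep r y Hr) (hr _ (HUk y)).
have UH : forall a, HU (Uphi_pt L yc Uk a) by move=> a; case: (rA a).
have orthv : forall m h, HU h -> (forall a : 'I_Q * 'I_K, phi L yc a.1 a.2 h = 0) ->
    ipU (v m) h = 0.
  move=> m h Hh h0.
  apply: (orth_min _ _ _ _ HU0 HUlin HUsym HUip HUpos _ _ (HUv m) Hh) => t.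
  have lcE : lc t h 1 (v m) = (fun x => t * h x + v m x).
    by apply: functional_extensionality => x; rewrite /lc mul1r.
  pose v' := fun j => if j == m then lc t h 1 (v m) else v j.
  have hv'm : v' m = lc t h 1 (v m) by rewrite /v' eqxx.
  have hv'j : forall j, j != m -> v' j = v j by move=> j /negbTE hj; rewrite /v' hj.
  have Hv' : forall j, HU (v' j).
    move=> j; rewrite /v'; case: (j == m); [exact: (lcH _ _ _ HU0 HUlin _ _ _ _ Hh (HUv m)) | exact: HUv].
  have hL : forall q k, L q (v' m) (yc k) = L q (v m) (yc k).
    move=> q k; rewrite hv'm lcE hLlin //.
    by have := h0 (q, k); rewrite /phi /= => ->; rewrite mulr0 add0r.
  have hPhi : forall j k, PhiS (fun y => sval y) L (v' j) (yc k) =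
                          PhiS (fun y => sval y) L (v j) (yc k).
    move=> j k; case: (eqVneq j m) => [->|ne]; last by rewrite hv'j.
    rewrite /PhiS; congr row_mx; apply/rowP => q; rewrite !mxE; exact: hL.
  have feas' : inf_feasible (fun y => sval y) L yc Yobs uobs f Pbar HU HP v' G.
    split => //.
      move=> j n; case: (eqVneq j m) => [->|ne]; last by rewrite hv'j.
      have [k hk] := hobs m n.
      have hv := hobsv m n; rewrite hk in hv.
      rewrite hv'm lcE /= hk hv.
      by have := h0 (Ordinal hQ, k); rewrite /phi /= hL1 => ->; rewrite mulr0 add0r.
    by move=> j k; rewrite hPhi; exact: hconstr.
  have := hmin v' G feas'.
  have hs : \sum_(j < M | j != m) ipU (v' j) (v' j) =
            \sum_(j < M | j != m) ipU (v j) (v j).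
    by apply: eq_bigr => j hj; rewrite hv'j.
  rewrite /inf_objective (bigD1 m) // [X in _ <= _ + lambda * X](bigD1 m) //= hs hv'm.
  rewrite !mulrDr => hle.
  have : lambda * ipU (v m) (v m) <= lambda * ipU (lc t h 1 (v m)) (lc t h 1 (v m)) by lra.
  by rewrite ler_pM2l.
have hspan : forall m, exists c : 'I_Q * 'I_K -> R, forall w, HU w ->
    ipU (v m) w = \sum_(i in [set: 'I_Q * 'I_K]) c i * phi L yc i.1 i.2 w.
  move=> m; apply: (span_fun _ _ _ HUlin _ (fun i => phi L yc i.1 i.2)).
  - by move=> i a g1 g2 H1 H2; have [hl _] := hdual i.1 i.2; exact: hl.
  - move=> a g1 g2 H1 H2.
    by rewrite (HUsym (v m) _ (HUv m) (HUlin a g1 g2 H1 H2)) (HUip a g1 g2 (v m) H1 H2 (HUv m)) (HUsym g1 (v m) H1 (HUv m)) (HUsym g2 (v m) H2 (HUv m)).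
  - by move=> w Hw hw; apply: orthv => // a; apply: hw; rewrite in_setT.
have [alpha halpha] := functional_choice _ hspan.
have vE : forall m, v m = ufun L yc Uk (alpha m).
  move=> m; apply: functional_extensionality => y.
  rewrite -(HUrep (v m) y (HUv m)) (halpha m _ (HUk y)) /ufun.
  by apply: eq_big => [i|i _]; [rewrite in_setT | rewrite mulrC].
pose S := Sall (fun y => sval y) L yc Uk alpha.
have SE : forall m k, S (m, k) = PhiS (fun y => sval y) L (v m) (yc k).
  by move=> m k; rewrite /S /Sall /Sm vE.
have orthG : forall h, HP h -> (forall i, h (S i) = 0) -> ipP G h = 0.
  move=> h Hh h0.
  apply: (orth_min _ _ _ _ HP0 HPlin HPsym HPip HPpos _ _ HPG Hh) => t.
  have feas' : inf_feasible (fun y => sval y) L yc Yobs uobs f Pbar HU HP v (lc t h 1 G).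
    split => //; first exact: (lcH _ _ _ HP0 HPlin _ _ _ _ Hh HPG).
    move=> m k; rewrite /lc -(SE m k) h0 mulr0 add0r mul1r (SE m k); exact: hconstr.
  by have := hmin v _ feas'; rewrite /inf_objective => hle; lra.
have [beta hbeta] : exists beta : 'I_M * 'I_K -> R, forall w, HP w ->
    ipP G w = \sum_(i in [set: 'I_M * 'I_K]) beta i * w (S i).
  apply: (span_fun _ _ _ HPlin _ (fun i w => w (S i))).
  - by move=> i a g1 g2 _ _.
  - move=> a g1 g2 H1 H2.
    by rewrite (HPsym G _ HPG (HPlin a g1 g2 H1 H2)) (HPip a g1 g2 G H1 H2 HPG) (HPsym g1 G H1 HPG) (HPsym g2 G H2 HPG).
  - by move=> w Hw hw; apply: orthG => // i; apply: hw; rewrite in_setT.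
have GE : G = Pfun (fun y => sval y) L yc Uk Pk alpha beta.
  apply: functional_extensionality => s.
  rewrite -(HPrep G s HPG) (hbeta _ (HPk s)) /Pfun.
  by apply: eq_big => [i|i _]; [rewrite in_setT | rewrite mulrC].
have ufunH : forall (al : 'I_Q * 'I_K -> R), HU (ufun L yc Uk al).
  by move=> al; exact: (sumH _ _ _ HU0 HUlin _ (index_enum _) (Uphi_pt L yc Uk) al UH).
have PfunE : forall (al : 'I_M -> 'I_Q * 'I_K -> R) (be : 'I_M * 'I_K -> R), Pfun (fun y => sval y) L yc Uk Pk al be =
    (fun s => \sum_(i <- index_enum _) (fun x => Pk x (Sall (fun y => sval y) L yc Uk al i)) s * be i).
  move=> al be; apply: functional_extensionality => s; rewrite /Pfun.
  by apply: eq_bigr => i _; rewrite Psym.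
have PfunH : forall (al : 'I_M -> 'I_Q * 'I_K -> R) (be : 'I_M * 'I_K -> R), HP (Pfun (fun y => sval y) L yc Uk Pk al be).
  move=> al be; rewrite PfunE.
  exact: (sumH _ _ _ HP0 HPlin _ (index_enum _) _ be (fun i => HPk _)).
have objP : forall (al : 'I_M -> 'I_Q * 'I_K -> R) (be : 'I_M * 'I_K -> R),
    ipP (Pfun (fun y => sval y) L yc Uk Pk al be) (Pfun (fun y => sval y) L yc Uk Pk al be)
    = \sum_(i : 'I_M * 'I_K) \sum_(j : 'I_M * 'I_K)
      be i * Pk (Sall (fun y => sval y) L yc Uk al i) (Sall (fun y => sval y) L yc Uk al j) * be j.
  move=> al be.
  rewrite {1}PfunE (ipsum _ _ _ _ HP0 HPlin HPip _ _ _ be _ (fun i => HPk _) (PfunH al be)).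
  apply: eq_bigr => i _.
  rewrite HPsym ?HPk ?PfunH // HPrep ?PfunH // /Pfun big_distrr.
  apply: eq_bigr => j _; rewrite /= (Psym (Sall _ _ _ _ _ j)); ring.
have objU : forall (al : 'I_Q * 'I_K -> R), ipU (ufun L yc Uk al) (ufun L yc Uk al) =
    \sum_(a : 'I_Q * 'I_K) \sum_(b : 'I_Q * 'I_K) al a * Uphi_phi L yc Uk a b * al b.
  move=> al.
  rewrite {1}/ufun (ipsum _ _ _ _ HU0 HUlin HUip _ _ _ al _ UH (ufunH al)).
  apply: eq_bigr => a _.
  rewrite HUsym ?UH ?ufunH // /ufun (ipsum _ _ _ _ HU0 HUlin HUip _ _ _ al _ UH (UH a)).
  rewrite big_distrr; apply: eq_bigr => b _.
  have [_ hb] := rA b; rewrite hb ?UH // /Uphi_phi /= [al b * _]mulrC mulrA.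
  by [].
have vfun : v = fun m => ufun L yc Uk (alpha m).
  by apply: functional_extensionality => m; rewrite vE.
have objE : forall (al : 'I_M -> 'I_Q * 'I_K -> R) (be : 'I_M * 'I_K -> R),
    inf_objective lambda ipU ipP (fun m => ufun L yc Uk (al m))
      (Pfun (fun y => sval y) L yc Uk Pk al be)
    = fin_objective (fun y => sval y) L yc Uk Pk lambda al be.
  move=> al be; rewrite /inf_objective /fin_objective objP.
  by congr (_ + lambda * _); apply: eq_bigr => m _; rewrite objU.
exists alpha, beta; split => //.
split.
  split.
    by move=> m n; have := hobsv m n; rewrite vE.
  move=> m k; have := hconstr m k; rewrite vE GE => h.
  change (Pfun (fun y => sval y) L yc Uk Pk alpha beta
            (PhiS (fun y => sval y) L (ufun L yc Uk (alpha m)) (yc k)) =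
          f m (yc k) - Pbar (PhiS (fun y => sval y) L (ufun L yc Uk (alpha m)) (yc k))).
  rewrite -h; ring.
move=> al be [h1 h2].
have feas : inf_feasible (fun y => sval y) L yc Yobs uobs f Pbar HU HP
    (fun m => ufun L yc Uk (al m)) (Pfun (fun y => sval y) L yc Uk Pk al be).
  split.
  - by move=> m /=; apply: ufunH.
  - by apply: PfunH.
  - by [].
  - move=> m k; have e := h2 m k; rewrite /Sm in e.
    by rewrite /Pfun /= e; ring.
have := hmin _ _ feas.
by rewrite -objE -objE -vfun -GE.
Qed.
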